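(* Let $n,d,\ell\ge1$ be integers, $k$ an even positive integer, and $\mathcal{Q}$ a partition of $\mathcal{I}=\{(j,s): j\in[2\ell], s\in[d]\}$ with $|\mathcal{Q}|$ classes. For any $\mathcal{Q}$-valid collection $\{I_j\}_{j=1}^{2\ell}$ of tuples in $[n]^{kd/2}$, the number of collections $\{\sigma_j\}_{j=1}^{2\ell}$ of permutations in $\mathbb{S}_{kd/2}$ with $\mathrm{Par}(\{I_j\},\{\mathrm{id}\},\{\sigma_j\})=\mathcal{Q}$ is at most $$(kd/2)^{k|\mathcal{Q}|/2}\cdot\prod_{j=1}^{2\ell}\mathrm{hist}(I_j)!.$$
   Context: For a tuple $I=(i_1,\dots,i_q)\in[n]^q$, $\mathrm{hist}(I)=(\alpha_1,\dots,\alpha_n)$ where $\alpha_i$ is the number of times $i$ appears in $I$, and $\mathrm{hist}(I)!:=\prod_{i=1}^n\alpha_i!$ (with $0!=1$). For $\pi\in\mathbb{S}_q$ (permutations of $[q]$), $\pi(I):=(i_{\pi(1)},\dots,i_{\pi(q)})$. A tuple in $[n]^{kd/2}$ is viewed as a concatenation of $d$ consecutive blocks, each in $[n]^{k/2}$. Given $I_1,\dots,I_{2\ell}\in[n]^{kd/2}$ (indices modulo $2\ell$, $I_{2\ell+1}=I_1$) and $\pi_j,\sigma_j\in\mathbb{S}_{kd/2}$, let $A_{j,s}$ be the $s$-th block of $\pi_j(I_j)$ and $B_{j,s}$ the $s$-th block of $\sigma_j(I_{j+1})$. $\mathrm{Par}(\{I_j\},\{\pi_j\},\{\sigma_j\})$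 is the partition of $\mathcal{I}$ into classes of the relation $(j,s)\sim(j',s')$ iff $(A_{j,s},B_{j,s})=(A_{j',s'},B_{j',s'})$ or $(A_{j,s},B_{j,s})=(B_{j',s'},A_{j',s'})$. $\{\mathrm{id}\}$ means all $\pi_j$ equal the identity. A collection $\{I_j\}$ is called $\mathcal{Q}$-valid if there exist $\{\sigma_j\}$ with $\mathrm{Par}(\{I_j\},\{\mathrm{id}\},\{\sigma_j\})=\mathcal{Q}$. *)

(* Defs.v *)
From mathcomp Require Import all_boot all_fingroup.
Set Implicit Arguments. Unset Strict Implicit. Unset Printing Implicit Defensive.

Definition histfact (n q : nat) (I : q.-tuple 'I_n) : nat :=
  \prod_(i : 'I_n) (count_mem i I)`!.

Definition permt (n q : nat) (p : 'S_q) (I : q.-tuple 'I_n) : seq 'I_n :=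
  [seq tnth I (p i) | i <- enum 'I_q].

Definition blk (T : Type) (h : nat) (t : seq T) (s : nat) : seq T :=
  take h (drop (s * h) t).

Section Par.
Variables (n k d L : nat).
Let q := (k * d) %/ 2.
Variables (I : 'I_L -> q.-tuple 'I_n) (pi sigma : 'I_L -> 'S_q).

(* A_{j,s}: s-th block of pi_j(I_j) ; B_{j,s}: s-th block of sigma_j(I_{j+1}),
   indices mod L *)
Definition Ablk (x : 'I_L * 'I_d) : seq 'I_n :=
  blk (k %/ 2) (permt (pi x.1) (I x.1)) x.2.
Definition Bblk (x : 'I_L * 'I_d) : seq 'I_n :=
  blk (k %/ 2) (permt (sigma x.1) (I (ordS x.1))) x.2.

Definition par_rel : rel ('I_L * 'I_d) := fun x y =>
  ((Ablk x, Bblk x) == (Ablk y, Bblk y)) || ((Ablk x, Bblk x) == (Bblk y, Ablk y)).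

Definition Par : {set {set 'I_L * 'I_d}} :=
  equivalence_partition par_rel [set: 'I_L * 'I_d].
End Par.

Definition idperms (L q : nat) : 'I_L -> 'S_q := fun _ => 1%g.

Definition Qvalid (n k d L : nat) (Q : {set {set 'I_L * 'I_d}})
  (I : 'I_L -> ((k * d) %/ 2).-tuple 'I_n) : Prop :=
  exists sigma : 'I_L -> 'S_((k * d) %/ 2), Par I (@idperms L _) sigma = Q.

(* Main.v *)
Require Import Defs.
From mathcomp Require Import all_boot all_fingroup.
Set Implicit Arguments. Unset Strict Implicit. Unset Printing Implicit Defensive.
Lemma count_fiber n q (T : q.-tuple 'I_n) v : #|[set x | tnth T x == v]| = count_mem v T.
Proof.
rewrite -[in RHS](map_tnth_enum T) count_map cardsE cardE /enum_mem size_filter.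
rewrite (@eq_filter _ _ predT) // filter_predT. by apply: eq_count => x.
Qed.
Lemma foldr_prod (T : finType) (f : T -> nat) : foldr muln 1 [seq f x | x : T] = \prod_x f x.
Proof. by rewrite /image_mem foldrE big_map big_enum. Qed.
Section S1.
Local Open Scope group_scope.
Local Open Scope action_scope.
Lemma stab_card n q (T : q.-tuple 'I_n) :
  #|[set r : 'S_q | [forall x, tnth T (r x) == tnth T x]]| <= histfact T.
Proof.
set St := [set r : 'S_q | _].
pose fib v := [set x | tnth T x == v].
pose phi (r : 'S_q) := [ffun v => restr_perm (fib v) r].
have Nfib r v : r \in St -> r \in 'N(fib v | 'P).
  rewrite inE => /forallP Hr; apply/astabsP => y.
  by rewrite !inE /= apermE (eqP (Hr y)).
rewrite -(@card_in_imset _ _ phi); last first.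
  move=> r1 r2 H1 H2 /= e; apply/permP => x.
  have := congr1 (fun f : {ffun _ -> _} => f (tnth T x)) e; rewrite !ffunE => e'.
  have xf : x \in fib (tnth T x) by rewrite inE.
  by rewrite -(restr_permE (Nfib _ _ H1) xf) e' (restr_permE (Nfib _ _ H2) xf).
have sub : phi @: St \subset family (fun v => perm_on (fib v)).
  apply/subsetP => f /imsetP [r _ ->]; apply/familyP => v.
  rewrite ffunE; exact: restr_perm_on.
apply: (leq_trans (subset_leq_card sub)).
rewrite card_family foldr_prod /histfact; apply: leq_prod => v _.
by rewrite card_perm count_fiber.
Qed.
End S1.

Lemma perm_fiber n q (T : q.-tuple 'I_n) (g : {ffun 'I_q -> 'I_n}) :
  #|[set p : 'S_q | [ffun i => tnth T (p i)] == g]| <= histfact T.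
Proof.
set S := [set p : 'S_q | _].
have [-> | [p0 Hp0]] := set_0Vmem S; first by rewrite cards0.
rewrite -(card_imset _ (@mulgI _ p0^-1)%g).
apply: (leq_trans _ (stab_card T)); apply: subset_leq_card.
apply/subsetP => r /imsetP [p Hp ->]; rewrite inE; apply/forallP => x.
move: Hp Hp0; rewrite !inE => /eqP Hp /eqP Hp0.
rewrite permM.
have e1 := congr1 (fun f : {ffun _ -> _} => f (p0^-1 x)%g) Hp.
have e2 := congr1 (fun f : {ffun _ -> _} => f (p0^-1 x)%g) Hp0.
move: e1 e2; rewrite /= !ffunE => ->; rewrite -(permKV p0 x) => e2.
by rewrite -e2 permKV.
Qed.

Definition upr (T : eqType) (a b c e : T) := ((a, b) == (c, e)) || ((a, b) == (e, c)).

Lemma upr_sym (T : eqType) (a b c e : T) : upr a b c e -> upr c e a b.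
Proof. by rewrite /upr => /orP [/eqP [-> ->] | /eqP [-> ->]]; rewrite eqxx ?orbT. Qed.

Lemma upr_trans (T : eqType) (a b c e f g : T) :
  upr a b c e -> upr a b f g -> upr c e f g.
Proof.
by rewrite /upr => /orP [/eqP [-> ->] | /eqP [-> ->]] /orP [/eqP [-> ->] | /eqP [-> ->]];
  rewrite eqxx ?orbT.
Qed.

Lemma upr_det (T : eqType) (a b ax bx bx' : T) :
  upr a b ax bx -> upr a b ax bx' -> bx = bx'.
Proof.
rewrite /upr => /orP [/eqP [e1 e2] | /eqP [e1 e2]] /orP [/eqP [e3 e4] | /eqP [e3 e4]];
  congruence.
Qed.

Lemma blk_ext (T : Type) (x0 : T) h d (u v : seq T) :
  size u = d * h -> size v = d * h ->
  (forall s, s < d -> blk h u s = blk h v s) -> u = v.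
Proof.
move=> su sv E; apply: (eq_from_nth (x0 := x0)); first by rewrite su sv.
move=> i; rewrite su => Hi.
have hp : 0 < h by case: h Hi {su sv E} => //; rewrite muln0.
have Hs : i %/ h < d by rewrite ltn_divLR.
have := congr1 (fun w => nth x0 w (i %% h)) (E _ Hs).
by rewrite /blk !nth_take ?ltn_mod // !nth_drop -divn_eq.
Qed.

Definition enc n q h (i0 : 'I_q) (x0 : 'I_n) (T : q.-tuple 'I_n) (b : seq 'I_n) : h.-tuple 'I_q :=
  [tuple insubd i0 (index (nth x0 b m) T) | m < h].

Lemma enc_inj n q h i0 x0 (T : q.-tuple 'I_n) b b' :
  size b = h -> size b' = h -> {subset b <= T} -> {subset b' <= T} ->
  enc h i0 x0 T b = enc h i0 x0 T b' -> b = b'.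
Proof.
move=> sb sb' Hb Hb' E; apply: (eq_from_nth (x0 := x0)); first by rewrite sb sb'.
move=> m; rewrite sb => Hm.
have := congr1 (fun w => val (tnth w (Ordinal Hm))) E.
rewrite !tnth_mktuple !val_insubd.
have i1 : nth x0 b m \in T by apply: Hb; rewrite mem_nth ?sb.
have i2 : nth x0 b' m \in T by apply: Hb'; rewrite mem_nth ?sb'.
have j1 : index (nth x0 b m) T < q by move: (i1); rewrite -index_mem size_tuple.
have j2 : index (nth x0 b' m) T < q by move: (i2); rewrite -index_mem size_tuple.
rewrite /= j1 j2 => e.
by rewrite -(nth_index x0 i1) e (nth_index x0 i2).
Qed.

Theorem claim2 (n d l k : nat) (hn : 0 < n) (hd : 0 < d) (hl : 0 < l)
  (hk : 0 < k) (hkeven : ~~ odd k)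
  (Q : {set {set 'I_(2 * l) * 'I_d}})
  (hQ : partition Q [set: 'I_(2 * l) * 'I_d])
  (I : 'I_(2 * l) -> ((k * d) %/ 2).-tuple 'I_n)
  (hI : Qvalid Q I) :
  #|[set sigma : {ffun 'I_(2 * l) -> 'S_((k * d) %/ 2)} |
       Par I (@idperms (2 * l) _) sigma == Q]|
  <= ((k * d) %/ 2) ^ ((k * #|Q|) %/ 2) * \prod_(j < 2 * l) histfact (I j).
Proof.
set q := (k * d) %/ 2.
set h := k %/ 2.
have hk2 : h * 2 = k by rewrite /h divnK // dvdn2.
have hq : q = d * h by rewrite /q -hk2 mulnAC mulnK // mulnC.
have hp : 0 < h by rewrite -hk2 muln_gt0 andbT in hk.
have q0 : 0 < q by rewrite hq muln_gt0 hd hp.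
pose i0 : 'I_q := Ordinal q0.
pose x0 : 'I_n := Ordinal hn.
pose F (sigma : {ffun 'I_(2*l) -> 'S_q}) : {ffun 'I_(2*l) -> {ffun 'I_q -> 'I_n}} :=
  [ffun j => [ffun i => tnth (I (ordS j)) (sigma j i)]].
pose bseq (t : {ffun 'I_(2*l) -> {ffun 'I_q -> 'I_n}}) j := [seq t j i | i <- enum 'I_q].
pose Bt t (x : 'I_(2*l) * 'I_d) := blk h (bseq t x.1) x.2.
have BF (sigma : {ffun 'I_(2*l) -> 'S_q}) x : Bblk I sigma x = Bt (F sigma) x.
  rewrite /Bblk /Bt /permt /bseq /=; congr blk; apply: eq_map => i; by rewrite !ffunE.
have sizeB (sigma : {ffun 'I_(2*l) -> 'S_q}) x : size (Bt (F sigma) x) = h.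
  rewrite /Bt size_takel // size_drop /bseq size_map size_enum_ord hq -mulnBl.
  by apply: leq_pmull; rewrite subn_gt0.
have memB (sigma : {ffun 'I_(2*l) -> 'S_q}) x : {subset Bt (F sigma) x <= I (ordS x.1)}.
  move=> v /mem_take/mem_drop/mapP [i _ ->]; rewrite !ffunE; exact: mem_tnth.
set S := [set sigma | _].
have step1 : #|S| <= #|F @: S| * \prod_(j < 2 * l) histfact (I j).
  rewrite -sum1_card (partition_big_imset F) /= -sum_nat_const.
  apply: leq_sum => t _.
  rewrite sum1dep_card.
  apply: (@leq_trans #|[set sigma | F sigma == t]|).
    by apply: subset_leq_card; apply/subsetP => sigma; rewrite !inE => /andP [].
  have -> : #|[set sigma | F sigma == t]| =
     #|family (fun j => [set p : 'S_q | [ffun i => tnth (I (ordS j)) (p i)] == t j])|.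
    apply: eq_card => sigma; rewrite inE; apply/eqP/familyP => [<- j | Hj].
      by rewrite inE; apply/eqP/ffunP => i; rewrite !ffunE.
    apply/ffunP => j; move: (Hj j); rewrite inE => /eqP <-.
    by apply/ffunP => i; rewrite !ffunE.
  rewrite card_family foldr_prod [X in _ <= X](reindex_inj (@ordS_inj _)).
  by apply: leq_prod => j _; apply: perm_fiber.
pose H (t : {ffun 'I_(2*l) -> {ffun 'I_q -> 'I_n}}) : {ffun 'I_#|Q| -> h.-tuple 'I_q} :=
  [ffun c => if [pick x in (enum_val c : {set _})] is Some x
             then enc h i0 x0 (I (ordS x.1)) (Bt t x) else [tuple i0 | _ < h]].
have step2 : #|F @: S| <= q ^ (h * #|Q|).
  rewrite -(@card_in_imset _ _ H); last first.
    move=> _ _ /imsetP [s1 S1 ->] /imsetP [s2 S2 ->] eH.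
    have eB : forall x, Bt (F s1) x = Bt (F s2) x.
      move=> x.
      move: S1 S2; rewrite !inE => /eqP P1 /eqP P2.
      pose C := [set y in [set: 'I_(2*l) * 'I_d] | par_rel I (@idperms (2*l) q) s1 x y].
      have CP1 : C \in Par I (@idperms (2*l) q) s1 by apply/imsetP; exists x.
      have CQ : C \in Q by rewrite -P1.
      have xC : x \in C by rewrite !inE /par_rel eqxx.
      have := congr1 (fun f : {ffun _ -> _} => f (enum_rank_in CQ C)) eH.
      rewrite !ffunE (enum_rankK_in CQ CQ).
      case: pickP => [y yC | /(_ x)]; last by rewrite xC.
      move=> /enc_inj eBy.
      have {}eBy : Bt (F s1) y = Bt (F s2) y by apply: eBy; rewrite ?sizeB //; apply: memB.
      have r1 : par_rel I (@idperms (2*l) q) s1 x y by move: yC; rewrite !inE.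
      have CP2 : C \in Par I (@idperms (2*l) q) s2 by rewrite P2.
      move: CP2 => /imsetP [z _ Cz].
      have r2x : par_rel I (@idperms (2*l) q) s2 z x by have := xC; rewrite Cz !inE.
      have r2y : par_rel I (@idperms (2*l) q) s2 z y by have := yC; rewrite Cz !inE.
      change (is_true (upr (Ablk I (@idperms (2*l) q) x) (Bblk I s1 x) (Ablk I (@idperms (2*l) q) y) (Bblk I s1 y))) in r1.
      change (is_true (upr (Ablk I (@idperms (2*l) q) z) (Bblk I s2 z) (Ablk I (@idperms (2*l) q) x) (Bblk I s2 x))) in r2x.
      change (is_true (upr (Ablk I (@idperms (2*l) q) z) (Bblk I s2 z) (Ablk I (@idperms (2*l) q) y) (Bblk I s2 y))) in r2y.
      have u2 := upr_sym (upr_trans r2x r2y).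
      have u1 := upr_sym r1.
      rewrite !BF in u1 u2; rewrite eBy in u1.
      exact: upr_det u1 u2.
    apply/ffunP => j; apply/ffunP => i.
    have : bseq (F s1) j = bseq (F s2) j.
      apply: (blk_ext x0 (h := h) (d := d)); try by rewrite /bseq size_map size_enum_ord hq.
      move=> s Hs; exact: (eB (j, Ordinal Hs)).
    by move/eq_in_map => E; apply: E; rewrite mem_enum.
  apply: leq_trans (max_card _) _.
  by rewrite card_ffun card_tuple !card_ord -expnM mulnC.
have -> : (k * #|Q|) %/ 2 = h * #|Q| by rewrite -hk2 mulnAC mulnK.
exact: leq_trans step1 (leq_mul step2 (leqnn _)).
Qed.
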